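(* Let $K$ be a non-Archimedean locally compact field of characteristic $p>0$ with group of 1-units $U=1+M_K$. Let $f:U\to U$ be a locally analytic group endomorphism, and suppose there is a power series $\sum_{n\ge0}a_nx^n\in 1+xK[[x]]$ with $f(1+x)=\sum_{n=0}^\infty a_nx^n$ for all $x\in M_K$. Then $a_n\in\mathbb{F}_p$ for all $n\ge0$.
   Context: $M_K$ is the maximal ideal of the ring of integers $R_K$ of $K$; with constant field $\mathbb{F}$ of order $q$ and uniformizer $\pi$, $K=\mathbb{F}((\pi))$, $U=1+\pi\mathbb{F}[[\pi]]$, and $|x|=q^{-v(x)}$. A continuous function $f$ on a ball $B_{\alpha,t}=\{u\in R_K:|u-\alpha|\le t\}$, $t=|\rho|$, is analytic there if $f(u)=\sum_{n\ge0}c_n\left(\frac{u-\alpha}{\rho}\right)^n$ with $c_n\in K$, $c_n\to0$; $f:U\to K$ is locally analytic if each $\alpha\in U$ has a ball $B_{\alpha,t_\alpha}\subset U$, $t_\alpha>0$, on which $f$ is analytic. $\mathbb{F}_p$ denotes the prime subfield of $K$. *)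

(* Defs.v *)
From HB Require Import structures.
From mathcomp Require Import all_boot all_order all_algebra.
From mathcomp Require Import reals.
Set Implicit Arguments. Unset Strict Implicit. Unset Printing Implicit Defensive.
Import Order.TTheory GRing.Theory Num.Theory.
Local Open Scope ring_scope.

Section Defs.
Variables (K : fieldType) (R : realType) (abs : K -> R).

Definition ultrametric_abs : Prop :=
  [/\ forall x, 0 <= abs x,
      forall x, abs x = 0 <-> x = 0,
      forall x y, abs (x * y) = abs x * abs y &
      forall x y, abs (x + y) <= Num.max (abs x) (abs y)].

Definition abs_cvg (u : nat -> K) (l : K) : Prop :=
  forall e : R, 0 < e -> exists N : nat, forall n, (N <= n)%N -> abs (u n - l) < e.

Definition series_to (s : nat -> K) (l : K) : Prop :=
  abs_cvg (fun n => \sum_(i < n) s i) l.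

(* (K, abs) is a non-discrete locally compact non-Archimedean valued field:
   abs is a nontrivial ultrametric absolute value and the closed unit ball
   R_K is (sequentially) compact. *)
Definition nonarch_local_field : Prop :=
  [/\ ultrametric_abs,
      exists pi : K, 0 < abs pi < 1 &
      forall u : nat -> K, (forall n, abs (u n) <= 1) ->
        exists (phi : nat -> nat) (l : K),
          (forall n, (phi n < phi n.+1)%N) /\ abs_cvg (fun n => u (phi n)) l].

Definition in_RK (x : K) : Prop := abs x <= 1.
Definition in_MK (x : K) : Prop := abs x < 1.
Definition in_U (x : K) : Prop := in_MK (x - 1).

Definition in_ball (alpha : K) (t : R) (u : K) : Prop :=
  in_RK u /\ abs (u - alpha) <= t.

Definition analytic_on_ball (f : K -> K) (alpha rho : K) : Prop :=
  exists c : nat -> K,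
    (forall e : R, 0 < e -> exists N : nat, forall n, (N <= n)%N -> abs (c n) < e) /\
    forall u, in_ball alpha (abs rho) u ->
      series_to (fun n => c n * ((u - alpha) / rho) ^+ n) (f u).

Definition locally_analytic_U (f : K -> K) : Prop :=
  forall alpha, in_U alpha ->
    exists rho : K, rho != 0 /\
      (forall u, in_ball alpha (abs rho) u -> in_U u) /\
      analytic_on_ball f alpha rho.

Definition U_endomorphism (f : K -> K) : Prop :=
  (forall u, in_U u -> in_U (f u)) /\
  (forall u v, in_U u -> in_U v -> f (u * v) = f u * f v).

End Defs.

(* Main.v *)
Require Import Defs.
From HB Require Import structures.
From mathcomp Require Import all_boot all_order all_algebra.
From mathcomp Require Import reals ring lra zify.
Import Order.TTheory GRing.Theory Num.Theory.
Local Open Scope ring_scope.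

Lemma abs1 {K : fieldType} {R : realType} {abs : K -> R} :
  ultrametric_abs abs -> abs 1 = 1.
Proof.
case=> h0 hz hm hd.
have n1 : abs 1 != 0 by apply/eqP => /hz; apply/eqP; exact: oner_neq0.
apply: (mulfI n1); by rewrite -hm !mulr1.
Qed.

Lemma absN {K : fieldType} {R : realType} {abs : K -> R} :
  ultrametric_abs abs -> forall x, abs (- x) = abs x.
Proof.
move=> hU; have [h0 hz hm hd] := hU.
have e : abs (-1) = 1.
  have : abs (-1) ^+ 2 == 1 by rewrite expr2 -hm mulrNN mulr1 (abs1 hU).
  rewrite sqrf_eq1 => /orP [/eqP //|/eqP e].
  have := h0 (-1); rewrite e; lra.
by move=> x; rewrite -mulN1r hm e mul1r.
Qed.

Lemma absX {K : fieldType} {R : realType} {abs : K -> R} :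
  ultrametric_abs abs -> forall x n, abs (x ^+ n) = abs x ^+ n.
Proof.
move=> hU x n; have [h0 hz hm hd] := hU.
elim: n => [|n IH]; first by rewrite !expr0 (abs1 hU).
by rewrite !exprS hm IH.
Qed.

Lemma absB_le {K : fieldType} {R : realType} {abs : K -> R} :
  ultrametric_abs abs -> forall x y, abs (x - y) <= Num.max (abs x) (abs y).
Proof.
move=> hU x y; have [h0 hz hm hd] := hU.
by rewrite -(absN hU y); apply: hd.
Qed.

Lemma abs_sum_le {K : fieldType} {R : realType} {abs : K -> R} :
  ultrametric_abs abs -> forall (N : nat) (P : pred 'I_N) (c : 'I_N -> K) (M : R),
  0 <= M -> (forall i, P i -> abs (c i) <= M) ->
  abs (\sum_(i < N | P i) c i) <= M.
Proof.
move=> hU N P c M hM hc; have [h0 hz hm hd] := hU.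
apply: (big_ind (fun z => abs z <= M)) => //.
- by have -> : abs 0 = 0 by apply/hz.
- move=> x y hx hy; apply: le_trans (hd x y) _.
  by rewrite ge_max hx hy.
Qed.

Lemma cvgB {K : fieldType} {R : realType} {abs : K -> R} :
  ultrametric_abs abs -> forall u v l1 l2,
  abs_cvg abs u l1 -> abs_cvg abs v l2 ->
  abs_cvg abs (fun n => u n - v n) (l1 - l2).
Proof.
move=> hU u v l1 l2 hu hv e he.
have [N1 h1] := hu e he; have [N2 h2] := hv e he.
exists (maxn N1 N2) => n hn.
have -> : u n - v n - (l1 - l2) = (u n - l1) - (v n - l2) by ring.
apply: le_lt_trans (absB_le hU _ _) _.
rewrite gt_max h1 ?h2 //.
- exact: leq_trans (leq_maxr _ _) hn.
- exact: leq_trans (leq_maxl _ _) hn.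
Qed.

Lemma cvgXp {K : fieldType} {R : realType} {abs : K -> R} (p : nat) :
  ultrametric_abs abs -> p \in [pchar K] -> forall u l,
  abs_cvg abs u l -> abs_cvg abs (fun n => u n ^+ p) (l ^+ p).
Proof.
move=> hU hc u l hu e he.
have [h0 hz hm hd] := hU.
have hp : (0 < p)%N by apply: prime_gt0; exact: (pcharf_prime hc).
have hmin : 0 < Num.min e 1 by rewrite lt_min he ltr01.
have [N hN] := hu (Num.min e 1) hmin.
exists N => n hn.
have := hN n hn; rewrite lt_min => /andP [h1 h2].
have -> : u n ^+ p - l ^+ p = (u n - l) ^+ p by rewrite -!(pFrobenius_autE hc) rmorphB.
rewrite absX //.
apply: le_lt_trans h1.
rewrite -[X in _ <= X]expr1; apply: ler_wiXn2l => //.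
  exact: ltW.
Qed.

Lemma terms0 {K : fieldType} {R : realType} {abs : K -> R} :
  ultrametric_abs abs -> forall c l, series_to abs c l ->
  forall e, 0 < e -> exists N, forall n, (N <= n)%N -> abs (c n) < e.
Proof.
move=> hU c l hc e he.
have [N hN] := hc e he.
exists N => n hn.
have -> : c n = (\sum_(i < n.+1) c i - l) - (\sum_(i < n) c i - l)
  by rewrite big_ord_recr /=; ring.
apply: le_lt_trans (absB_le hU _ _) _.
by rewrite gt_max hN ?hN // (leq_trans hn).
Qed.

Lemma bounded_seq {K : fieldType} {R : realType} {abs : K -> R} :
  ultrametric_abs abs -> forall (c : nat -> K) N, (forall n, (N <= n)%N -> abs (c n) <= 1) ->
  exists B, 0 < B /\ forall n, abs (c n) <= B.
Proof.
move=> hU c N hN.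
have : exists B, 1 <= B /\ forall n, (n < N)%N -> abs (c n) <= B.
  elim: N {hN} => [|N [B [hB1 hB]]]; first by exists 1; split.
  exists (Num.max B (abs (c N))); split; first by rewrite le_max hB1.
  move=> n; rewrite ltnS leq_eqVlt => /orP [/eqP ->|hn].
    by rewrite le_max lexx orbT.
  by rewrite le_max hB.
case=> B [hB1 hB]; exists B; split; first by apply: lt_le_trans hB1; exact: ltr01.
move=> n; case: (ltnP n N) => hn; first exact: hB.
exact: le_trans (hN n hn) hB1.
Qed.

Lemma inU_mul {K : fieldType} {R : realType} {abs : K -> R} :
  ultrametric_abs abs -> forall u v, in_U abs u -> in_U abs v -> in_U abs (u * v).
Proof.
move=> hU u v; have [h0 hz hm hd] := hU; rewrite /in_U /in_MK => hu hv.
have hv1 : abs v <= 1.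
  have -> : v = (v - 1) + 1 by ring.
  apply: le_trans (hd _ _) _; rewrite (abs1 hU) ge_max lexx andbT; exact: ltW.
have -> : u * v - 1 = (u - 1) * v + (v - 1) by ring.
apply: le_lt_trans (hd _ _) _; rewrite gt_max hv andbT hm.
apply: le_lt_trans hu; rewrite -[X in _ <= X]mulr1; apply: ler_wpM2l => //.
Qed.

Lemma f_exp {K : fieldType} {R : realType} {abs : K -> R} (f : K -> K) :
  ultrametric_abs abs -> U_endomorphism abs f -> forall u, in_U abs u ->
  forall k, f (u ^+ k.+1) = f u ^+ k.+1.
Proof.
move=> hU [_ hf] u hu; elim=> [|k IH]; first by rewrite !expr1.
have huk : in_U abs (u ^+ k.+1).
  elim: k {IH} => [|k IHk]; first by rewrite expr1.
  by rewrite exprS; apply: inU_mul.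
by rewrite exprS mulrC hf // IH -exprSr.
Qed.

Lemma pow_to0 {R : realType} (s c B : R) :
  0 < s -> s < 1 -> 0 < c -> (forall j, c <= B * s ^+ j) -> False.
Proof.
move=> hs0 hs1 hc hj.
set t := s^-1 - 1.
have ht : 0 < t by rewrite /t subr_gt0 invf_gt1.
have e : s^-1 = 1 + t by rewrite /t; ring.
have bern : forall j : nat, 1 + j%:R * t <= s^-1 ^+ j.
  rewrite e; elim=> [|j IH]; first by rewrite expr0 mul0r addr0.
  rewrite exprS -natr1.
  have h1 : 0 <= 1 + t by rewrite ltW // addr_gt0 // ltr01.
  apply: le_trans (ler_wpM2l h1 IH).
  have : 0 <= j%:R * t * t by apply: mulr_ge0; [apply: mulr_ge0|]; rewrite // ltW.
  lra.
have hB : forall j : nat, c * (1 + j%:R * t) <= B.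
  move=> j; apply: le_trans (ler_wpM2l (ltW hc) (bern j)) _.
  rewrite -(ler_pM2r (exprn_gt0 j hs0)) -mulrA -exprMn mulVf ?gt_eqF // expr1n mulr1.
  exact: hj.
have hBc : 0 <= B / (c * t).
  have := hB 0%N; rewrite mul0r addr0 mulr1 => hcB.
  apply: divr_ge0; first exact: (le_trans (ltW hc) hcB).
  by apply: mulr_ge0; apply: ltW.
have := hB (Num.bound (B / (c * t))).
have := archi_boundP hBc.
set m := (Num.bound _)%:R.
rewrite ltr_pdivrMr ?mulr_gt0 //.
have : 0 < c by [].
nra.
Qed.

Lemma fixed_prime {K : fieldType} (p : nat) :
  p \in [pchar K] -> forall x : K, x ^+ p = x -> exists k : nat, x = k%:R.
Proof.
move=> hc x hx.
have hp := pcharf_prime hc.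
have p2 := prime_gt1 hp.
case: (boolP [exists i : 'I_p, x == (val i)%:R]) => [/existsP [i /eqP ->]|hno].
  by exists (val i).
exfalso.
pose P : {poly K} := 'X^p - 'X.
have sP : size P = p.+1.
  rewrite /P size_polyDl ?size_polyXn // size_polyN size_polyX ltnS //.
have P0 : P != 0 by rewrite -size_poly_eq0 sP.
pose rs := x :: [seq (i%:R : K) | i <- iota 0 p].
suff : (size rs < size P)%N by rewrite sP /= size_map size_iota ltnn.
apply: max_poly_roots P0 _ _.
- rewrite /= /root /P !hornerE hx subrr eqxx /=.
  apply/allP => y /mapP [i _ ->].
  by rewrite /root !hornerE -(pFrobenius_autE hc) pFrobenius_aut_nat subrr.
- rewrite /= map_inj_in_uniq ?iota_uniq ?andbT.
    apply/mapP => [[i]]; rewrite mem_iota add0n => hi hxi.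
    move/existsP: hno; apply; exists (Ordinal hi); by rewrite hxi.
  move=> i j; rewrite !mem_iota !add0n => hi hj hij.
  wlog lt: i j hi hj hij / (j <= i)%N.
    move=> W; case: (leqP j i) => h; first exact: W.
    by apply/esym/W => //; apply: ltnW.
  apply/eqP; rewrite eqn_leq lt andbT.
  have : (p %| i - j)%N by rewrite (dvdn_pcharf hc) natrB // hij subrr.
  case: (posnP (i - j)) => [/eqP|h]; first by rewrite subn_eq0.
  move=> /(dvdn_leq h) h2; have : (i - j < p)%N by apply: leq_ltn_trans (leq_subr _ _) hi.
  by rewrite ltnNge h2.
Qed.

Lemma aux_ineq (m j : nat) : (m + (m + j) * m + j <= (m + j) * m.+1)%N.
Proof. rewrite mulnS; lia. Qed.

Theorem lemma2p1 (K : fieldType) (R : realType) (abs : K -> R) (p : nat)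
    (hK : nonarch_local_field abs)
    (hp : prime p) (hchar : (p%:R : K) = 0)
    (f : K -> K)
    (hf_end : U_endomorphism abs f)
    (hf_an : locally_analytic_U abs f)
    (a : nat -> K) (ha0 : a 0%N = 1)
    (hser : forall x : K, in_MK abs x ->
              series_to abs (fun n => a n * x ^+ n) (f (1 + x))) :
  forall n : nat, exists k : nat, a n = k%:R.
Proof.
case: hK => hU [pi hpi] _.
have [h0 hz hm hd] := hU.
have hc : p \in [pchar K] by apply/andP; split; [|apply/eqP].
have p0 : (0 < p)%N by apply: prime_gt0.
have Fr : forall z : K, z ^+ p = Frobenius_aut hc z by move=> z; rewrite pFrobenius_autE.
move: hpi => /andP [hpi0 hpi1].
set b := fun n => a n - a n ^+ p.
have le_pow : forall (r : R) (n : nat), 0 <= r -> r <= 1 -> (0 < n)%N -> r ^+ n <= r.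
  move=> r n r0 r1 n0; rewrite -[X in _ <= X]expr1; exact: ler_wiXn2l.
have E : forall x, in_MK abs x ->
    abs_cvg abs (fun N => \sum_(i < N) b i * (x ^+ p) ^+ i) 0.
  move=> x hx.
  have hxp : in_MK abs (x ^+ p).
    rewrite /in_MK absX //; apply: (le_lt_trans _ hx); apply: le_pow; [exact: h0|exact: (ltW hx)|exact: p0].
  have h1 := hser _ hxp.
  have h2 := cvgXp p hU hc _ _ (hser x hx).
  have hux : in_U abs (1 + x) by rewrite /in_U addrC addKr.
  have ef : f (1 + x ^+ p) = f (1 + x) ^+ p.
    have -> : 1 + x ^+ p = (1 + x) ^+ p by rewrite !Fr rmorphD rmorph1.
    by rewrite -(prednK p0) (f_exp f hU hf_end _ hux).
  have := cvgB hU _ _ _ _ h1 h2; rewrite ef subrr => H e he.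
  have [N hN] := H e he; exists N => n hn.
  have -> : \sum_(i < n) b i * (x ^+ p) ^+ i =
      \sum_(i < n) a i * (x ^+ p) ^+ i - (\sum_(i < n) a i * x ^+ i) ^+ p.
    rewrite [(\sum_(i < n) _) ^+ p]Fr rmorph_sum -sumrB; apply: eq_bigr => i _.
    by rewrite /b /= pFrobenius_autE mulrBl exprMn -!exprM mulnC.
  exact: hN.
set y0 := pi ^+ p.
have hpi1' : abs pi <= 1 by apply: ltW.
have [B [B0 hB]] : exists B, 0 < B /\ forall n, abs (b n * y0 ^+ n) <= B.
  have hpiM : in_MK abs pi by [].
  have [N0 hN0] := terms0 hU _ _ (hser _ hpiM) _ ltr01.
  apply: (bounded_seq hU _ N0) => n hn.
  have hlt := hN0 n hn.
  have -> : b n * y0 ^+ n =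
      a n * pi ^+ n * (pi ^+ n) ^+ p.-1 - (a n * pi ^+ n) ^+ p.
    rewrite /b /y0 exprAC.
    move: (pi ^+ n) (a n) => z an.
    have ep : p = p.-1.+1 by rewrite prednK.
    move: (p.-1) ep => q ->.
    rewrite exprMn !exprS; move: (an ^+ q) (z ^+ q) => A Z; ring.
  apply: le_trans (absB_le hU _ _) _; rewrite ge_max; apply/andP; split.
    rewrite hm absX // absX //; rewrite -[X in _ <= X]mulr1.
    have hpn0 : 0 <= abs pi ^+ n by apply: exprn_ge0.
    have hpn1 : abs pi ^+ n <= 1 by apply: exprn_ile1.
    apply: ler_pM; [exact: h0 | exact: exprn_ge0 | exact: ltW | exact: exprn_ile1].
  by rewrite absX //; apply: exprn_ile1; [exact: h0 | exact: ltW].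
set s := abs pi ^+ p.
have s0 : 0 < s by apply: exprn_gt0.
have s1 : s < 1 by rewrite /s; apply: le_lt_trans hpi1; apply: le_pow; [exact: h0|exact: hpi1'|exact: p0].
have absy0 : abs y0 = s by rewrite /y0 absX.
have Hb : forall m, b m = 0.
  elim/ltn_ind => m IH.
  apply/eqP; apply/negPn/negP => bm0.
  set c := abs (b m).
  have c0 : 0 < c by rewrite lt_def h0 andbT; apply/eqP => /hz /eqP; exact/negP.
  apply: (pow_to0 s c B s0 s1 c0) => j.
  set k := (m + j).+1.
  set x := pi ^+ k.
  have hx : in_MK abs x.
    rewrite /in_MK /x absX //; apply: le_lt_trans hpi1; apply: le_pow; [exact: h0|exact: hpi1'|by []].
  have absyi : forall i, abs ((x ^+ p) ^+ i) = s ^+ (k * i).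
    by move=> i; rewrite !absX // /s -!exprM mulnCA.
  have sk0 : 0 < s ^+ (k * m) by apply: exprn_gt0.
  have [N hN] := E x hx (c * s ^+ (k * m)) (mulr_gt0 c0 sk0).
  set n := maxn N m.+1.
  have hS := hN n (leq_maxl _ _).
  rewrite subr0 in hS.
  have mn : (m < n)%N by apply: leq_maxr.
  rewrite (bigD1 (Ordinal mn)) //= in hS.
  set T := \sum_(i < n | i != Ordinal mn) _ in hS.
  set S := _ + T in hS.
  have hT : abs T <= B * s ^+ (k * m) * s ^+ j.
    apply: abs_sum_le => //.
      by apply: mulr_ge0; [apply: mulr_ge0; apply: ltW|apply: exprn_ge0; apply: ltW].
    move=> i hi.
    case: (ltngtP i m) => him.
    - rewrite IH // mul0r.
      have -> : abs 0 = 0 by apply/hz.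
      by apply: mulr_ge0; [apply: mulr_ge0; apply: ltW|apply: exprn_ge0; apply: ltW].
    - rewrite hm absyi.
      have hBi := hB i; rewrite hm absX // absy0 in hBi.
      have -> : (k * i = i + (m + j) * i)%N by rewrite /k mulSn.
      rewrite exprD mulrA.
      apply: le_trans (ler_wpM2r (exprn_ge0 _ (ltW s0)) hBi) _.
      rewrite -mulrA -exprD; apply: ler_wpM2l; first exact: ltW.
      apply: ler_wiXn2l; [exact: ltW s0 | exact: ltW s1 |].
      rewrite /k mulSn; apply: leq_trans (leq_mul (leqnn (m + j)) him).
      exact: aux_ineq.
    - by move: hi; rewrite (_ : i = Ordinal mn) ?eqxx //; apply: val_inj.
  have hbm : abs (b m * (x ^+ p) ^+ m) = c * s ^+ (k * m) by rewrite hm absyi.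
  have : abs (b m * (x ^+ p) ^+ m) <= Num.max (abs S) (abs T).
    have -> : b m * (x ^+ p) ^+ m = S - T by rewrite /S addrK.
    exact: absB_le.
  rewrite le_max hbm => /orP [h|h].
    by have := lt_le_trans hS h; rewrite ltxx.
  have := le_trans h hT.
  by rewrite -mulrA [s ^+ (k * m) * _]mulrC mulrA ler_pM2r.
move=> n; apply: (fixed_prime p hc).
by apply/esym/eqP; rewrite -subr_eq0; apply/eqP; exact: Hb.
Qed.
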